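(* Let $\Phi\in\mathcal G'$ and $m\in\mathbb N$. Then $\Phi\in\mathcal D^{-m,2}$ if and only if \[ \int_0^1\int_0^{\lambda_m}\cdots\int_0^{\lambda_2}\int_{\mathcal S'_{\mathbb C}}|S\Phi(\lambda_1u)|^2\,d\nu(u)\,d\lambda_1\cdots d\lambda_m<\infty . \]
   Context: Let $\mu$ be the white noise measure on the tempered distributions $\mathcal S'$ (Gaussian with $\int e^{i\langle\xi,x\rangle}d\mu=e^{-|\xi|^2/2}$, $\xi\in\mathcal S$, $|\cdot|$ the $L^2$ norm). For $s\in\mathbb R$, $\mathcal G_s$ is the space of formal chaos series $\Phi=\sum_{n\ge0}\langle\Phi^{(n)},:\cdot^{\otimes n}:\rangle$ (Wick-ordered monomials / multiple Wiener integrals) with symmetric kernels $\Phi^{(n)}\in L^2(\mathbb R^n,dx)_{\mathbb C}$ and $\sum_n2^{2sn}n!|\Phi^{(n)}|^2<\infty$, and $\mathcal G'=\bigcup_{q\in\mathbb N}\mathcal G_{-q}$. The $S$-transform is $S\Phi(h)=\sum_n\langle\Phi^{(n)},h^{\otimes n}\rangle$, $h\in\mathcal S_{\mathbb C}$. Let $\nu$ be the Gaussian measure on $\mathcal S'_{\mathbb C}$ with $\int\exp(i\,\mathrm{Re}\langle h,\bar u\rangle)d\nu(u)=\exp(-\tfrac14\langle h,\bar h\rangle)$; the monomials $u\mapsto\langle\Phi^{(n)},u^{\otimes n}\rangle$ are defined in $L^2(\nu)$, orthogonal for different $n$, with $\int|\langle\Phi^{(n)},u^{\otimes n}\rangle|^2d\nu=n!|\Phi^{(n)}|^2$,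 and $S\Phi(\lambda u):=\sum_n\lambda^n\langle\Phi^{(n)},u^{\otimes n}\rangle$, so that $\lambda\mapsto\int|S\Phi(\lambda u)|^2d\nu(u)\in[0,\infty]$ is defined. For $\alpha\in\mathbb R$, $\Phi\in\mathcal G'$ belongs to $\mathcal D^{\alpha,2}$ iff $\sum_{n}(1+n^\alpha)\,n!\,|\Phi^{(n)}|^2<\infty$ (for $\alpha<0$ only the terms $n\ge1$ matter for this convergence). *)

(* Defs.v *)
From HB Require Import structures.
From mathcomp Require Import all_boot all_order all_algebra.
From mathcomp Require Import all_classical all_reals all_analysis.
Set Implicit Arguments. Unset Strict Implicit. Unset Printing Implicit Defensive.
Import Order.TTheory GRing.Theory Num.Theory.
Local Open Scope classical_set_scope.
Local Open Scope ring_scope.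

(* Abstract setting:
   - [k n] stands for the L^2 norm |Phi^(n)| of the n-th chaos kernel of Phi;
   - on a probability space (Omega, nu), [Mre n] and [Mim n] are the real and
     imaginary parts of the monomial u |-> <Phi^(n), u^{(x) n}>. *)

(* The hypotheses on the monomials stated in the context: measurable,
   pairwise orthogonal in L^2(nu; C), with int |<Phi^(n),u^n>|^2 dnu = n! |Phi^(n)|^2. *)
Definition chaos_monomials (R : realType) (d : measure_display)
  (Omega : measurableType d) (nu : probability Omega R)
  (k : nat -> R) (Mre Mim : nat -> Omega -> R) : Prop :=
  [/\ forall n, measurable_fun setT (Mre n),
      forall n, measurable_fun setT (Mim n),
      forall n, (\int[nu]_(u in setT) ((Mre n u) ^+ 2 + (Mim n u) ^+ 2)%:E
                 = (n`!%:R * k n ^+ 2)%:E)%E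
    & forall n j, n != j ->
        (\int[nu]_(u in setT) (Mre n u * Mre j u + Mim n u * Mim j u)%:E = 0)%E
        /\ (\int[nu]_(u in setT) (Mim n u * Mre j u - Mre n u * Mim j u)%:E = 0)%E].

(* Phi in G' = union_q G_{-q}. *)
Definition in_Gdual (R : realType) (k : nat -> R) : Prop :=
  exists q : nat,
    (\sum_(0 <= n <oo) (((2 : R) ^- (2 * q * n)) * n`!%:R * k n ^+ 2)%:E < +oo)%E.

Definition in_D_neg (R : realType) (m : nat) (k : nat -> R) : Prop :=
  (\sum_(0 <= n <oo) ((1 + n%:R) ^- m * n`!%:R * k n ^+ 2)%:E < +oo)%E.

(* lambda |-> int |S Phi(lambda u)|^2 dnu(u) in [0, +oo], the L^2(nu) norm of the
   series sum_n lambda^n <Phi^(n), u^n>, as the limit of the L^2 norms of its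
   partial sums. *)
Definition S_norm2 (R : realType) (d : measure_display)
  (Omega : measurableType d) (nu : probability Omega R)
  (Mre Mim : nat -> Omega -> R) (lam : R) : \bar R :=
  limn (fun N : nat =>
    (\int[nu]_(u in setT)
       ((\sum_(n < N) lam ^+ n * Mre n u) ^+ 2
        + (\sum_(n < N) lam ^+ n * Mim n u) ^+ 2)%:E)%E).

(* iter_int m f x = int_0^x int_0^{l_m} ... int_0^{l_2} f(l_1) dl_1 ... dl_m *)
Fixpoint iter_int (R : realType) (m : nat) (f : R -> \bar R) : R -> \bar R :=
  match m with
  | 0 => f
  | m'.+1 => fun x => (\int[@lebesgue_measure R]_(t in `[0%R, x]) iter_int m' f t)%E
  end.

(* Main.v *)
Set Warnings "-notation-overridden,-ambiguous-paths,-deprecated,-notation-incompatible-prefix".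
Require Import Defs.
From HB Require Import structures.
From mathcomp Require Import all_boot all_order all_algebra.
From mathcomp Require Import all_classical all_reals all_analysis.
From mathcomp Require Import ring lra measurable_realfun.
Import Order.TTheory GRing.Theory Num.Theory numFieldNormedType.Exports.
Local Open Scope ring_scope.

Lemma int_pow (R : realType) (p : nat) (x : R) : 0 <= x ->
  (\int[@lebesgue_measure R]_(t in `[0%R, x]) (t ^+ p)%:E =
   (x ^+ p.+1 / p.+1%:R)%:E)%E.
Proof.
rewrite le_eqVlt => /predU1P[<-|x0].
  by rewrite set_itv1 integral_set1 expr0n /= mul0r.
have cF : continuous (fun t : R => t ^+ p.+1 / p.+1%:R).
  move=> t; apply: cvgM; last exact: cvg_cst.
  exact: exprn_continuous.
rewrite (@continuous_FTC2 _ _ (fun t : R => t ^+ p.+1 / p.+1%:R)) //.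
- by rewrite expr0n /= mul0r oppr0 adde0.
- by apply: continuous_subspaceT => t; exact: exprn_continuous.
- split.
  + move=> t _; apply: derivableM; first exact: exprn_derivable.
    exact: derivable_cst.
  + exact/cvg_at_right_filter/cF.
  + exact/cvg_at_left_filter/cF.
- move=> t _; rewrite derive1Mr; last exact: exprn_derivable.
  rewrite exp_derive1 /= -mulrA mulrC -mulrA [_^-1 * _]mulrC mulfV ?mulr1 //.
Qed.

Section A.
Context (R : realType) (d : measure_display) (Omega : measurableType d)
  (nu : probability Omega R) (k : nat -> R) (Mre Mim : nat -> Omega -> R).
Hypothesis H : chaos_monomials nu k Mre Mim.

Let mre n : measurable_fun setT (Mre n). Proof. by case: H. Qed.
Let mim n : measurable_fun setT (Mim n). Proof. by case: H. Qed.

Lemma sq_int n : nu.-integrable setT (fun u => (Mre n u ^+ 2 + Mim n u ^+ 2)%:E).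
Proof.
case: H => _ _ hint _.
apply/integrableP; split.
  by apply/measurable_EFinP; apply: measurable_funD; apply: measurable_funX.
rewrite (eq_integral (fun u => (Mre n u ^+ 2 + Mim n u ^+ 2)%:E)).
  by rewrite hint ltry.
by move=> u _; rewrite gee0_abs // lee_fin addr_ge0 // sqr_ge0.
Qed.

Lemma cross_int n j : nu.-integrable setT
  (fun u => (Mre n u * Mre j u + Mim n u * Mim j u)%:E).
Proof.
apply: (le_integrable measurableT _ _ (integrableD measurableT (sq_int n) (sq_int j))).
  apply/measurable_EFinP; apply: measurable_funD; exact: measurable_funM.
move=> u _; rewrite /= lee_fin.
set a := Mre n u; set b := Mre j u; set c := Mim n u; set e := Mim j u.
rewrite [X in _ <= X]ger0_norm; last by nra.
have h1 := sqr_ge0 (a - b); have h2 := sqr_ge0 (c - e).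
have h3 := sqr_ge0 (a + b); have h4 := sqr_ge0 (c + e).
rewrite ler_norml; apply/andP; split; nra.
Qed.

Lemma crossZ_int c n j : nu.-integrable setT
  (fun u => (c * (Mre n u * Mre j u + Mim n u * Mim j u))%:E).
Proof.
have := integrableZl measurableT c (cross_int n j).
by apply: eq_integrable => // u _; rewrite EFinM.
Qed.

Lemma fin_id (lam : R) (N : nat) :
  (\int[nu]_(u in setT) ((\sum_(n < N) lam ^+ n * Mre n u) ^+ 2
        + (\sum_(n < N) lam ^+ n * Mim n u) ^+ 2)%:E
  = (\sum_(n < N) lam ^+ (2 * n) * (n`!%:R * k n ^+ 2))%:E)%E.
Proof.
case: H => _ _ hint horth.
transitivity (\int[nu]_(u in setT) (\sum_(i < N) \sum_(j < N)
   ((lam ^+ i * lam ^+ j) * (Mre i u * Mre j u + Mim i u * Mim j u))%:E)%E)%E.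
  apply: eq_integral => u _; symmetry.
  under eq_bigr do rewrite sumEFin.
  rewrite sumEFin; congr EFin.
  symmetry; rewrite !expr2 !mulr_suml -big_split; apply: eq_bigr => i _.
  rewrite !mulr_sumr -big_split; apply: eq_bigr => j _ /=; ring.
rewrite integral_sum //; last first.
  by move=> i; apply: integrable_sum => // j _; exact: crossZ_int.
rewrite -sumEFin; apply: eq_bigr => i _.
rewrite integral_sum //; last by move=> j; exact: crossZ_int.
rewrite (bigD1 i) //= big1 ?adde0.
  under eq_integral do rewrite -!expr2.
  under eq_integral do rewrite EFinM.
  rewrite integralZl //; last exact: sq_int.
  by rewrite hint -EFinM -exprM mulnC.
move=> j ji; under eq_integral do rewrite EFinM.
rewrite integralZl //; last exact: cross_int.
have ij : (i : nat) != j by rewrite eq_sym.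
have [-> _] := horth i j ij.
by rewrite mule0.
Qed.

Definition SN := S_norm2 nu Mre Mim.
Definition aa n := n`!%:R * k n ^+ 2.
Definition Pn (n m : nat) : nat := \prod_(i < m) (2 * n + i).+1.

Lemma aa_ge0 n : 0 <= aa n.
Proof. by rewrite /aa mulr_ge0 // sqr_ge0. Qed.

Lemma SN_series (lam : R) :
  SN lam = (\sum_(0 <= n <oo) (lam ^+ (2 * n) * aa n)%:E)%E.
Proof.
rewrite /SN /S_norm2; congr (limn _); apply/funext => N.
by rewrite fin_id -sumEFin big_mkord.
Qed.

Lemma iterP m : forall t : R, 0 <= t ->
  iter_int m SN t = (\sum_(0 <= n <oo) (aa n * t ^+ (2 * n + m) / (Pn n m)%:R)%:E)%E.
Proof.
elim: m => [|m IH] t t0.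
  rewrite /= SN_series; apply: eq_eseriesr => n _.
  by rewrite /Pn big_ord0 addn0 divr1 mulrC.
rewrite /=.
transitivity (\int[@lebesgue_measure R]_(x in `[0%R, t])
  (\sum_(0 <= n <oo) (aa n * x ^+ (2 * n + m) / (Pn n m)%:R)%:E)%E)%E.
  apply: eq_integral => x; rewrite inE /= in_itv /= => /andP[x0 _].
  exact: IH.
rewrite integral_nneseries //; last first.
- move=> n x; rewrite /= in_itv /= => /andP[x0 _].
  by rewrite lee_fin mulr_ge0 ?invr_ge0 // mulr_ge0 ?aa_ge0 // exprn_ge0.
- move=> n; apply/measurable_EFinP; apply: measurable_funM => //.
  apply: measurable_funM => //; exact: measurable_funX.
apply: eq_eseriesr => n _.
under eq_integral do rewrite mulrAC EFinM.
rewrite ge0_integralZl_EFin //; last first.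
- by rewrite mulr_ge0 ?invr_ge0 ?aa_ge0.
- by apply/measurable_EFinP; exact: measurable_funX.
- by move=> x; rewrite /= in_itv /= => /andP[x0 _]; rewrite lee_fin exprn_ge0.
rewrite int_pow // -EFinM; congr EFin.
rewrite /Pn big_ord_recr /= natrM invfM -addnS.

ring.
Qed.
End A.

From mathcomp Require Import zify.

Lemma Pn_lb n m : (n.+1 ^ m <= Pn n m)%N.
Proof.
rewrite /Pn -[X in (_ ^ X <= _)%N](card_ord m) -prod_nat_const.
by apply: leq_prod => i _; lia.
Qed.

Lemma Pn_ub n m : (Pn n m <= (m.+1 * n.+1) ^ m)%N.
Proof.
rewrite /Pn -[X in (_ <= _ ^ X)%N](card_ord m) -prod_nat_const.
apply: leq_prod => i _; have := ltn_ord i; nia.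
Qed.

Lemma Pn_gt0 n m : (0 < Pn n m)%N.
Proof. by apply: leq_trans (Pn_lb n m); rewrite expn_gt0. Qed.

Lemma key1 (R : realType) (a : R) n m : 0 <= a ->
  a / (Pn n m)%:R <= (1 + n%:R) ^- m * a.
Proof.
move=> a0; rewrite addrC natr1 -natrX mulrC; apply: ler_wpM2r => //.
rewrite lef_pV2 ?posrE ?ltr0n ?expn_gt0 ?Pn_gt0 // ler_nat.
exact: Pn_lb.
Qed.

Lemma key2 (R : realType) (a : R) n m : 0 <= a ->
  (1 + n%:R) ^- m * a <= (m.+1 ^ m)%N%:R * (a / (Pn n m)%:R).
Proof.
move=> a0; rewrite addrC natr1 -natrX mulrC mulrCA; apply: ler_wpM2l => //.
rewrite ler_pdivlMr ?ltr0n ?Pn_gt0 // mulrC ler_pdivrMr ?ltr0n ?expn_gt0 //.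
by rewrite -natrM ler_nat -expnMn; exact: Pn_ub.
Qed.

Theorem theorem2p11 (R : realType) (d : measure_display)
  (Omega : measurableType d) (nu : probability Omega R)
  (k : nat -> R) (Mre Mim : nat -> Omega -> R) (m : nat) :
  (forall n, 0 <= k n) ->
  chaos_monomials nu k Mre Mim ->
  in_Gdual k ->
  (0 < m)%N ->
  (in_D_neg m k <-> (iter_int m (S_norm2 nu Mre Mim) 1 < +oo)%E).
Proof.
move=> _ H _ _.
have := @iterP _ _ _ _ _ _ _ H m 1 ler01; rewrite /SN => ->.
under eq_eseriesr do rewrite expr1n mulr1.
rewrite /in_D_neg; split => h.
  apply: le_lt_trans h; apply: lee_nneseries => n _.
    by rewrite lee_fin mulr_ge0 ?invr_ge0 ?aa_ge0.
  by rewrite lee_fin -mulrA; apply: key1; exact: aa_ge0.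
have h2 : ((m.+1 ^ m)%N%:R%:E *
   (\sum_(0 <= n <oo) (aa R k n / (Pn n m)%:R)%:E) < +oo)%E.
  by rewrite lte_mul_pinfty // lee_fin.
apply: le_lt_trans h2.
rewrite -nneseriesZl; last first.
  by move=> n _; rewrite lee_fin mulr_ge0 ?invr_ge0 ?aa_ge0.
apply: lee_nneseries => n _.
  by rewrite lee_fin -mulrA mulr_ge0 ?invr_ge0 ?exprn_ge0 ?addr_ge0 ?aa_ge0.
by rewrite lee_fin -mulrA; apply: key2; exact: aa_ge0.
Qed.
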